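(* Let $k\ge1$ and $B>0$ be constants and let $F=(F_L,F_R)$ be as defined below. Then $F$ is monotonically nondecreasing on $[0,1]^2$: if $(\alpha_L,\alpha_R),(\alpha_L',\alpha_R')\in[0,1]^2$ with $\alpha_L\le\alpha_L'$ and $\alpha_R\le\alpha_R'$, then $F_L(\alpha_L,\alpha_R)\le F_L(\alpha_L',\alpha_R')$ and $F_R(\alpha_L,\alpha_R)\le F_R(\alpha_L',\alpha_R')$. In particular, at every point with $\sqrt{\alpha_L\alpha_R}B>1$, one has $1-(1-\theta_L)(1-\theta_R)B^2\alpha_L\alpha_R>0$, where $(\theta_L,\theta_R)$ is as in the definition of $F$.
   Context: The map $F$: for $(\alpha_L,\alpha_R)\in[0,1]^2$, if $\sqrt{\alpha_L\alpha_R}\,B\le1$ set $(\theta_L,\theta_R)=(0,0)$; otherwise let $(\theta_L,\theta_R)$ be the unique solution with $\theta_L,\theta_R>0$ of $\exp(-B\sqrt k\,\alpha_R\theta_R)=1-\theta_L$ and $\exp(-\frac{B}{\sqrt k}\alpha_L\theta_L)=1-\theta_R$. Then $F(\alpha_L,\alpha_R)=\big(\tfrac12(1+\theta_L\alpha_L),\tfrac12(1+\theta_R\alpha_R)\big)$. *)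

(* Defs.v *)
From Stdlib Require Import Reals Lra ClassicalEpsilon.
Open Scope R_scope.

Definition is_theta_sol (B k aL aR : R) (t : R * R) : Prop :=
  0 < fst t /\ 0 < snd t /\
  exp (- (B * sqrt k * aR * snd t)) = 1 - fst t /\
  exp (- (B / sqrt k * aL * fst t)) = 1 - snd t.

Definition theta (B k aL aR : R) : R * R :=
  if Rle_dec (sqrt (aL * aR) * B) 1 then (0, 0)
  else epsilon (inhabits (0, 0)) (is_theta_sol B k aL aR).

Definition F (B k aL aR : R) : R * R :=
  ((1 + fst (theta B k aL aR) * aL) / 2, (1 + snd (theta B k aL aR) * aR) / 2).

(* Main.v *)
Require Import Defs.
From Stdlib Require Import Reals Lra ClassicalEpsilon.
Open Scope R_scope.

Lemma exp_le_m (x y : R) : x <= y -> exp x <= exp y.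
Proof. intros [H|H]; [left; apply exp_increasing; auto | subst; lra]. Qed.

Lemma one_m_exp_ge (w : R) : w * exp (- w) <= 1 - exp (- w).
Proof.
  assert (H := exp_ineq1_le w). assert (E: exp w * exp (-w) = 1).
  { rewrite <- exp_plus. replace (w + - w) with 0 by ring. apply exp_0. }
  assert (P := exp_pos (-w)). nra.
Qed.

Lemma one_m_exp_gt (w : R) : w <> 0 -> w * exp (- w) < 1 - exp (- w).
Proof.
  intro Hw. assert (H := exp_ineq1 w Hw). assert (E: exp w * exp (-w) = 1).
  { rewrite <- exp_plus. replace (w + - w) with 0 by ring. apply exp_0. }
  assert (P := exp_pos (-w)). nra.
Qed.

Lemma Klem (u v : R) : 0 < u < v -> u * (1 - exp (- v)) < v * (1 - exp (- u)).
Proof.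
  intros [Hu Huv].
  assert (H1 : exp (- v) > exp (- u) * (1 - v + u)).
  { replace (- v) with (- u + (u - v)) by ring. rewrite exp_plus.
    assert (H := exp_ineq1 (u - v) ltac:(lra)). assert (P := exp_pos (-u)). nra. }
  assert (H2 : 1 > exp (- u) * (1 + u)).
  { assert (H := exp_ineq1 u ltac:(lra)). assert (E: exp u * exp (-u) = 1).
    { rewrite <- exp_plus. replace (u + - u) with 0 by ring. apply exp_0. }
    assert (P := exp_pos (-u)). nra. }
  nra.
Qed.

Definition hh (a b x : R) := 1 - exp (- (a * (1 - exp (- (b * x))))).

Lemma ratio (a b x1 x2 : R) : 0 < a -> 0 < b -> 0 < x1 < x2 ->
  x1 * hh a b x2 < x2 * hh a b x1.
Proof.
  intros Ha Hb [H1 H12]. unfold hh.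
  set (y1 := 1 - exp (- (b * x1))). set (y2 := 1 - exp (- (b * x2))).
  assert (Hy1 : 0 < y1).
  { unfold y1. assert (exp (- (b * x1)) < exp 0) by (apply exp_increasing; nra).
    rewrite exp_0 in H; lra. }
  assert (Hy12 : y1 < y2).
  { unfold y1, y2. assert (exp (- (b * x2)) < exp (- (b * x1))) by (apply exp_increasing; nra).
    lra. }
  assert (K1 := Klem (b * x1) (b * x2) ltac:(split; nra)).
  fold y1 y2 in K1.
  assert (K1' : x1 * y2 < x2 * y1) by nra.
  assert (K2 := Klem (a * y1) (a * y2) ltac:(split; nra)).
  set (h1 := 1 - exp (- (a * y1))) in *. set (h2 := 1 - exp (- (a * y2))) in *.
  assert (K2' : y1 * h2 < y2 * h1) by nra.
  assert (Hh1 : 0 < h1).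
  { unfold h1. assert (exp (- (a * y1)) < exp 0) by (apply exp_increasing; nra).
    rewrite exp_0 in H; lra. }
  assert (Hh2 : 0 < h2).
  { unfold h2. assert (exp (- (a * y2)) < exp 0) by (apply exp_increasing; nra).
    rewrite exp_0 in H; lra. }
  assert (y1 * (x1 * h2) < y1 * (x2 * h1)) by nra.
  nra.
Qed.

Lemma hh_mono (a b a' b' x : R) : 0 <= a <= a' -> 0 <= b <= b' -> 0 <= x ->
  hh a b x <= hh a' b' x.
Proof.
  intros Ha Hb Hx. unfold hh.
  assert (E1 : exp (- (b' * x)) <= exp (- (b * x))) by (apply exp_le_m; nra).
  assert (E0 : exp (- (b * x)) <= 1) by (rewrite <- exp_0; apply exp_le_m; nra).
  assert (exp (- (a' * (1 - exp (- (b' * x))))) <= exp (- (a * (1 - exp (- (b * x)))))).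
  { apply exp_le_m. nra. }
  lra.
Qed.

Lemma sol_le (a b a' b' x x' : R) : 0 < a <= a' -> 0 < b <= b' ->
  0 < x -> hh a b x = x -> 0 < x' -> hh a' b' x' = x' -> x <= x'.
Proof.
  intros Ha Hb Hx E Hx' E'.
  destruct (Rle_or_lt x x') as [|Hlt]; auto.
  assert (R1 := ratio a b x' x ltac:(lra) ltac:(lra) ltac:(lra)).
  rewrite E in R1.
  assert (x' < hh a b x') by nra.
  assert (hh a b x' <= hh a' b' x') by (apply hh_mono; lra).
  lra.
Qed.

Lemma hh_lt1 (a b x : R) : hh a b x < 1.
Proof. unfold hh. assert (P := exp_pos (- (a * (1 - exp (- (b * x)))))). lra. Qed.

Lemma exist_sol (a b : R) : 0 < a -> 0 < b -> 1 < a * b ->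
  exists x, 0 < x /\ hh a b x = x.
Proof.
  intros Ha Hb Hab.
  set (c := a * b) in *.
  set (x0 := (1 - / c) / (2 * (c + b))).
  assert (Hc : 0 < / c < 1).
  { split. apply Rinv_0_lt_compat; lra.
    rewrite <- Rinv_1. apply Rinv_lt_contravar; lra. }
  assert (Hx0 : 0 < x0).
  { unfold x0. apply Rdiv_lt_0_compat; nra. }
  assert (Hx0e : (c + b) * x0 = (1 - / c) / 2).
  { unfold x0. field. lra. }
  assert (Hgt : x0 < hh a b x0).
  { unfold hh. set (y := 1 - exp (- (b * x0))).
    assert (Ey1 : b * x0 * exp (- (b * x0)) <= y) by apply one_m_exp_ge.
    assert (Ey2 : 1 - b * x0 <= exp (- (b * x0))).
    { assert (H := exp_ineq1_le (- (b * x0))). lra. }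
    assert (Ey3 : y <= b * x0) by (unfold y; lra).
    assert (Eh : a * y * exp (- (a * y)) <= 1 - exp (- (a * y))) by apply one_m_exp_ge.
    assert (Eay : exp (- (a * b * x0)) <= exp (- (a * y))).
    { apply exp_le_m. assert (a * y <= a * (b * x0)) by (apply Rmult_le_compat_l; lra). lra. }
    assert (Eprod : exp (- (b * x0)) * exp (- (a * b * x0)) >= 1 - (c + b) * x0).
    { rewrite <- exp_plus. assert (H := exp_ineq1_le (- (b * x0) + - (a * b * x0))).
      unfold c. lra. }
    assert (Pa := exp_pos (- (a * y))). assert (Pb := exp_pos (- (b * x0))).
    assert (Pc := exp_pos (- (a * b * x0))).
    assert (L : c * x0 * (exp (- (b * x0)) * exp (- (a * b * x0))) <= 1 - exp (- (a * y))).
    { assert (S1 : a * (b * x0 * exp (- (b * x0))) * exp (- (a * y)) <= a * y * exp (- (a * y))).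
      { apply Rmult_le_compat_r; [lra|]. apply Rmult_le_compat_l; lra. }
      assert (S2 : exp (- (b * x0)) * exp (- (a * b * x0)) <= exp (- (b * x0)) * exp (- (a * y))).
      { apply Rmult_le_compat_l; lra. }
      assert (S3 : c * x0 * (exp (- (b * x0)) * exp (- (a * b * x0))) <= c * x0 * (exp (- (b * x0)) * exp (- (a * y)))).
      { apply Rmult_le_compat_l; [|lra]. nra. }
      assert (c * x0 * (exp (- (b * x0)) * exp (- (a * y))) = a * (b * x0 * exp (- (b * x0))) * exp (- (a * y))) by (unfold c; ring).
      lra. }
    assert (c * (1 - (c + b) * x0) > 1).
    { rewrite Hx0e. assert (c * / c = 1) by (field; lra). nra. }
    assert (c * x0 * (exp (- (b * x0)) * exp (- (a * b * x0))) >= c * x0 * (1 - (c + b) * x0)).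
    { apply Rle_ge, Rmult_le_compat_l; [nra|lra]. }
    assert (x0 * (c * (1 - (c + b) * x0)) > x0 * 1) by (apply Rmult_gt_compat_l; lra).
    nra. }
  assert (Hx01 : x0 < 1) by (assert (H := hh_lt1 a b x0); lra).
  destruct (IVT (fun x => x - hh a b x) x0 1) as [z [[Hz1 Hz2] Hz]].
  - unfold hh. reg.
  - lra.
  - lra.
  - assert (H := hh_lt1 a b 1). lra.
  - exists z. split; lra.
Qed.

Lemma sqrt_pos_prod (aL aR B : R) : 0 <= aL -> 0 <= aR -> 0 < B ->
  sqrt (aL * aR) * B > 1 -> 0 < aL /\ 0 < aR /\ B ^ 2 * aL * aR > 1.
Proof.
  intros HL HR HB H.
  assert (Hp : 0 < aL * aR).
  { destruct (Rle_or_lt (aL * aR) 0) as [Hn|Hp]; auto.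
    assert (aL * aR = 0) by nra. rewrite H0, sqrt_0 in H. lra. }
  assert (S := sqrt_sqrt (aL * aR) ltac:(lra)).
  assert (Sp := sqrt_pos (aL * aR)).
  split; [|split]; try nra.
Qed.

Lemma sol_hh (B k aL aR : R) (t : R * R) : 0 < k -> is_theta_sol B k aL aR t ->
  hh (B * sqrt k * aR) (B / sqrt k * aL) (fst t) = fst t /\
  snd t = 1 - exp (- (B / sqrt k * aL * fst t)).
Proof.
  intros Hk [H1 [H2 [E1 E2]]]. split; [|lra].
  unfold hh. replace (exp (-(B / sqrt k * aL * fst t))) with (1 - snd t) by lra.
  replace (1 - (1 - snd t)) with (snd t) by ring.
  rewrite E1. ring.
Qed.

Lemma theta_spec (B k aL aR : R) : 1 <= k -> 0 < B -> 0 <= aL -> 0 <= aR ->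
  sqrt (aL * aR) * B > 1 -> is_theta_sol B k aL aR (theta B k aL aR).
Proof.
  intros Hk HB HL HR H.
  destruct (sqrt_pos_prod aL aR B HL HR HB H) as [PL [PR Hab]].
  assert (Sk : 0 < sqrt k) by (apply sqrt_lt_R0; lra).
  unfold theta. destruct (Rle_dec (sqrt (aL * aR) * B) 1); [lra|].
  apply epsilon_spec.
  set (a := B * sqrt k * aR). set (b := B / sqrt k * aL).
  assert (Ha : 0 < a) by (unfold a; apply Rmult_lt_0_compat; nra).
  assert (Hb : 0 < b) by (unfold b; apply Rmult_lt_0_compat; [apply Rdiv_lt_0_compat|]; lra).
  assert (Eab : a * b = B ^ 2 * aL * aR) by (unfold a, b; field; lra).
  destruct (exist_sol a b Ha Hb ltac:(lra)) as [x [Hx Ex]].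
  exists (x, 1 - exp (- (b * x))). unfold is_theta_sol; simpl.
  assert (exp (- (b * x)) < exp 0) by (apply exp_increasing; nra). rewrite exp_0 in H0.
  split; [lra|split; [lra|split]].
  - fold a. unfold hh in Ex. replace (1 - (1 - exp (- (b * x)))) with (exp (- (b * x))) by ring.
    assert (E : exp (- (a * (1 - exp (- (b * x))))) = 1 - x) by lra.
    replace (a * (1 - exp (- (b * x)))) with (a * (1 - exp (- (b * x)))) in E by ring.
    exact E.
  - fold b. ring.
Qed.

Lemma theta_le (B k aL aR : R) : ~ (sqrt (aL * aR) * B > 1) -> theta B k aL aR = (0, 0).
Proof.
  intro H. unfold theta. destruct (Rle_dec (sqrt (aL * aR) * B) 1); auto. lra.
Qed.

Theorem mainTheorem11 (k B : R) (hk : 1 <= k) (hB : 0 < B) :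
  (forall aL aR aL' aR' : R,
     0 <= aL <= 1 -> 0 <= aR <= 1 -> 0 <= aL' <= 1 -> 0 <= aR' <= 1 ->
     aL <= aL' -> aR <= aR' ->
     fst (F B k aL aR) <= fst (F B k aL' aR') /\
     snd (F B k aL aR) <= snd (F B k aL' aR')) /\
  (forall aL aR : R,
     0 <= aL <= 1 -> 0 <= aR <= 1 -> sqrt (aL * aR) * B > 1 ->
     1 - (1 - fst (theta B k aL aR)) * (1 - snd (theta B k aL aR))
           * B ^ 2 * aL * aR > 0).
Proof.
  assert (Sk : 0 < sqrt k) by (apply sqrt_lt_R0; lra).
  split.
  - intros aL aR aL' aR' HL HR HL' HR' Hl Hr. unfold F.
    destruct (Rlt_dec 1 (sqrt (aL * aR) * B)) as [H|H].
    + assert (H' : sqrt (aL' * aR') * B > 1).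
      { assert (sqrt (aL * aR) <= sqrt (aL' * aR')) by (apply sqrt_le_1_alt; nra). nra. }
      destruct (sqrt_pos_prod aL aR B ltac:(lra) ltac:(lra) hB H) as [PL [PR _]].
      assert (T := theta_spec B k aL aR hk hB ltac:(lra) ltac:(lra) H).
      assert (T' := theta_spec B k aL' aR' hk hB ltac:(lra) ltac:(lra) H').
      destruct (sol_hh B k aL aR _ ltac:(lra) T) as [E1 E2].
      destruct (sol_hh B k aL' aR' _ ltac:(lra) T') as [E1' E2'].
      destruct T as [P1 [P2 _]]. destruct T' as [P1' [P2' _]].
      set (t := theta B k aL aR) in *. set (t' := theta B k aL' aR') in *.
      assert (Hb : 0 < B / sqrt k) by (apply Rdiv_lt_0_compat; lra).
      assert (Le : fst t <= fst t').
      { eapply sol_le; [| | exact P1 | exact E1 | exact P1' | exact E1'].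
        - split; [apply Rmult_lt_0_compat; nra|]. apply Rmult_le_compat_l; nra.
        - split; [apply Rmult_lt_0_compat; nra|]. apply Rmult_le_compat_l; nra. }
      assert (Le2 : snd t <= snd t').
      { rewrite E2, E2'. assert (exp (- (B / sqrt k * aL' * fst t')) <= exp (- (B / sqrt k * aL * fst t))).
        { apply exp_le_m. assert (B / sqrt k * aL <= B / sqrt k * aL') by (apply Rmult_le_compat_l; lra).
          assert (0 < B / sqrt k * aL) by (apply Rmult_lt_0_compat; lra). nra. }
        lra. }
      split; apply Rmult_le_compat_r; try lra; nra.
    + rewrite (theta_le B k aL aR H). simpl.
      destruct (Rlt_dec 1 (sqrt (aL' * aR') * B)) as [H'|H'].
      * assert (T' := theta_spec B k aL' aR' hk hB ltac:(lra) ltac:(lra) H').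
        destruct T' as [P1' [P2' _]].
        split; apply Rmult_le_compat_r; try lra; nra.
      * rewrite (theta_le B k aL' aR' H'). simpl. lra.
  - intros aL aR HL HR H.
    destruct (sqrt_pos_prod aL aR B ltac:(lra) ltac:(lra) hB H) as [PL [PR Hab]].
    assert (T := theta_spec B k aL aR hk hB ltac:(lra) ltac:(lra) H).
    destruct T as [P1 [P2 [E1 E2]]].
    set (t := theta B k aL aR) in *.
    set (a := B * sqrt k * aR) in *. set (b := B / sqrt k * aL) in *.
    assert (Eab : a * b = B ^ 2 * aL * aR) by (unfold a, b; field; lra).
    assert (Ha : 0 < a) by (unfold a; apply Rmult_lt_0_compat; nra).
    assert (Hb : 0 < b) by (unfold b; apply Rmult_lt_0_compat; [apply Rdiv_lt_0_compat|]; lra).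
    assert (Q1 := one_m_exp_gt (a * snd t) ltac:(nra)).
    assert (Q2 := one_m_exp_gt (b * fst t) ltac:(nra)).
    replace (- (a * snd t)) with (- (a * snd t)) in E1 by ring.
    assert (Ea : exp (- (a * snd t)) = 1 - fst t) by (rewrite <- E1; f_equal; unfold a; ring).
    rewrite Ea in Q1. rewrite E2 in Q2.
    replace ((1 - fst t) * (1 - snd t) * B ^ 2 * aL * aR) with ((1 - fst t) * (1 - snd t) * (a * b)) by (rewrite Eab; ring).
    assert (X1 : 0 < 1 - fst t) by (rewrite <- Ea; apply exp_pos).
    assert (X2 : 0 < 1 - snd t) by (rewrite <- E2; apply exp_pos).
    assert (Y1 : 0 <= a * snd t * (1 - fst t)) by (apply Rmult_le_pos; [apply Rmult_le_pos|]; lra).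
    assert (Y2 : 0 <= b * fst t * (1 - snd t)) by (apply Rmult_le_pos; [apply Rmult_le_pos|]; lra).
    assert (Z1 : (a * snd t * (1 - fst t)) * (b * fst t * (1 - snd t)) <= (a * snd t * (1 - fst t)) * snd t)
      by (apply Rmult_le_compat_l; lra).
    assert (Z2 : (a * snd t * (1 - fst t)) * snd t < fst t * snd t) by (apply Rmult_lt_compat_r; lra).
    assert (fst t * snd t * ((1 - fst t) * (1 - snd t) * (a * b)) < fst t * snd t).
    { replace (fst t * snd t * ((1 - fst t) * (1 - snd t) * (a * b))) with
        ((a * snd t * (1 - fst t)) * (b * fst t * (1 - snd t))) by ring. lra. }
    assert (Pp : 0 < fst t * snd t) by (apply Rmult_lt_0_compat; lra).
    assert ((1 - fst t) * (1 - snd t) * (a * b) < 1).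
    { apply (Rmult_lt_reg_l (fst t * snd t)); lra. }
    lra.
Qed.
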